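(* Let $q$ be a prime power, let $V$ be a $v$-dimensional vector space over $\mathrm{GF}(q)$, and let $\mathcal{G}$ be a $(g-1)$-spread of $V$, i.e. a set of $g$-dimensional subspaces of $V$ such that every $1$-dimensional subspace of $V$ is contained in exactly one element of $\mathcal{G}$. Let $L$ be a $2$-dimensional subspace of $V$ that is not contained in any element of $\mathcal{G}$. Then the number of $3$-dimensional subspaces of $V$ which contain $L$ and which are scattered with respect to $\mathcal{G}$ equals \[ \lambda_{\max}=\begin{bmatrix} v-2\\ 1\end{bmatrix}_q-\begin{bmatrix} 2\\ 1\end{bmatrix}_q\begin{bmatrix} g-1\\ 1\end{bmatrix}_q . \] In particular, this number does not depend on $L$.
   Context: For integers $0\le m\le n$, the Gaussian coefficient is $\begin{bmatrix} n\\ m\end{bmatrix}_q=\prod_{i=0}^{m-1}\frac{q^{n-i}-1}{q^{m-i}-1}$, the number of $m$-dimensional subspaces of an $n$-dimensional $\mathrm{GF}(q)$-vector space. A subspace $B\le V$ is called scattered with respect to the spread $\mathcal{G}$ if $B$ contains no $2$-dimensional subspace that is contained in some element of $\mathcal{G}$ (equivalently, $\dim(B\cap S)\le 1$ for every $S\in\mathcal{G}$). *)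

(* Defs.v *)
From HB Require Import structures.
From mathcomp Require Import all_boot all_algebra all_field.
Set Implicit Arguments. Unset Strict Implicit. Unset Printing Implicit Defensive.
Import GRing.Theory.

(* Subspaces {vspace vT} of a vector space over a finite field form a finite
   type (they are a subtype of a type of matrices over a finite field). *)
Import VectorInternalTheory.
HB.instance Definition _ (F : finFieldType) (vT : vectType F) :=
  [Countable of {vspace vT} by <:].
HB.instance Definition _ (F : finFieldType) (vT : vectType F) :=
  [Finite of {vspace vT} by <:].

Local Open Scope ring_scope.

Definition gauss (q n m : nat) : rat :=
  \prod_(i < m) (((q%:R : rat) ^+ (n - i)%N - 1) / ((q%:R : rat) ^+ (m - i)%N - 1)).

Section Spread.
Variables (F : finFieldType) (vT : vectType F).

Definition is_spread (g : nat) (G : {set {vspace vT}}) : Prop :=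
  (forall S, S \in G -> \dim S = g) /\
  (forall P : {vspace vT}, \dim P = 1%N ->
     #|[set S in G | (P <= S)%VS]| = 1%N).

Definition scattered (G : {set {vspace vT}}) (B : {vspace vT}) : bool :=
  [forall S in G, forall W : {vspace vT},
    ((\dim W == 2%N) && (W <= B)%VS) ==> ~~ (W <= S)%VS].
End Spread.

(* Main.v *)
Require Import Defs.
From HB Require Import structures.
From mathcomp Require Import all_boot all_algebra all_field.
From mathcomp Require Import ring zify.
Import GRing.Theory Num.Theory.
Set Implicit Arguments. Unset Strict Implicit. Unset Printing Implicit Defensive.

Section Aux.
Variables (F : finFieldType) (n : nat).
Local Notation vT := 'rV[F]_n.
Local Notation q := #|F|.

Lemma eqv_dim (C D : {vspace vT}) : (C <= D)%VS -> \dim D <= \dim C -> C = D.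
Proof.
move=> CD le; apply/eqP; case: (dimv_leqif_eq CD) => le2 <-.
by rewrite eqn_leq le2 le.
Qed.

Lemma dim_lt (C D : {vspace vT}) : (C <= D)%VS -> ~~ (D <= C)%VS -> \dim C < \dim D.
Proof. by move=> CD; rewrite (ltn_leqif (dimv_leqif_sup CD)). Qed.

Lemma dim_addline (A : {vspace vT}) x : x \notin A -> \dim (A + <[x]>) = (\dim A).+1.
Proof.
move=> xA.
have x0 : x != 0%R by apply: contraNneq xA => ->; rewrite mem0v.
have h := dimv_sum_cap A <[x]>.
rewrite dim_vline x0 in h.
suff c0 : \dim (A :&: <[x]>) = 0 by rewrite c0 addn0 in h; rewrite h addn1.
have : \dim (A :&: <[x]>) < \dim <[x]>.
  apply: dim_lt; first exact: capvSr.
  by rewrite subv_cap subvv andbT -memvE.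
by rewrite dim_vline x0; case: (\dim _).
Qed.

Lemma card_diff (A B : {vspace vT}) : (A <= B)%VS ->
  #|[set x : vT | (x \in B) && (x \notin A)]| + q ^ \dim A = q ^ \dim B.
Proof.
move=> AB.
have -> : [set x : vT | (x \in B) && (x \notin A)] = [set x | x \in B] :\: [set x | x \in A].
  by apply/setP => x; rewrite !inE andbC.
have := cardsID [set x : vT | x \in A] [set x | x \in B].
have -> : [set x : vT | x \in B] :&: [set x | x \in A] = [set x | x \in A].
  apply/setP => x; rewrite !inE; apply/andP/idP => [[]//|xA]; split=>//.
  exact: subvP AB x xA.
by rewrite !cardsE !card_vspace => <-; rewrite addnC.
Qed.

Definition ext_set (A U : {vspace vT}) :=
  [set B : {vspace vT} | [&& \dim B == (\dim A).+1, (A <= B)%VS & (B <= U)%VS]].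

Lemma count_ext (A U : {vspace vT}) : (A <= U)%VS ->
  #|ext_set A U| * (q ^ (\dim A).+1 - q ^ \dim A) + q ^ \dim A = q ^ \dim U.
Proof.
move=> AU.
rewrite -(card_diff AU); congr (_ + _).

symmetry; rewrite -sum1_card (partition_big (fun x => (A + <[x]>)%VS) (fun B => B \in ext_set A U)).
  idtac.
  rewrite -sum_nat_const; apply: eq_bigr => B; rewrite inE => /and3P [/eqP dB AB BU].
  rewrite -dB -(card_diff AB) addnK sum1dep_card; apply: eq_card => x.
  rewrite !inE; apply/idP/idP.
    case/andP=> /andP [xU xA] /eqP <-; rewrite xA andbT memvE; exact: addvSr.
  case/andP=> xB xA; rewrite xA (subvP BU x xB) /=.
  apply/eqP; apply: eqv_dim; first by rewrite subv_add AB -memvE.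
  by rewrite dim_addline // dB.
move=> x; rewrite inE => /andP [xU xA]; rewrite inE dim_addline // eqxx addvSl /=.
by rewrite subv_add AU -memvE.
Qed.


Local Open Scope ring_scope.
Lemma ext_val (A U : {vspace vT}) : (A <= U)%VS ->
  (#|ext_set A U|%:R : rat) =
    ((q%:R : rat) ^+ (\dim U - \dim A) - 1) / ((q%:R : rat) - 1).
Proof.
move=> AU; have h := count_ext AU.
have q1 : (1 < q)%N := finNzRing_gt1 F.
have le : (q ^ \dim A <= q ^ (\dim A).+1)%N by apply: leq_pexp2l; lia.
move: h; set c := #|ext_set A U|; set k := \dim A; set m := \dim U => h.
have kle : (k <= m)%N := dimvS AU.
have hr : ((c * (q ^ k.+1 - q ^ k) + q ^ k)%N%:R : rat) = (q ^ m)%N%:R by rewrite h.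
rewrite natrD natrM natrB // !natrX in hr.
set Q := (q%:R : rat) in hr *.
have Q1 : Q - 1 != 0.
  rewrite subr_eq0 /Q -[X in _ == X]/(1%:R) eqr_nat; apply/eqP; lia.
have Q0 : Q ^+ k != 0 by rewrite expf_neq0 // /Q pnatr_eq0; lia.
apply: (mulIf Q1); rewrite divfK //; apply: (mulfI Q0).
have -> : Q ^+ k * (Q ^+ (m - k) - 1) = Q ^+ m - Q ^+ k.
  by rewrite -{2}(subnKC kle) exprD; ring.
rewrite -hr exprS; ring.
Qed.

End Aux.

Section Main.
Variables (F : finFieldType) (v g : nat) (G : {set {vspace 'rV[F]_v}}) (L : {vspace 'rV[F]_v}).
Hypotheses (spG : is_spread g G) (dL : \dim L = 2) (nLS : forall S, S \in G -> ~ (L <= S)%VS).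
Local Notation vT := 'rV[F]_v.

Definition G0 := [set S in G | (L :&: S != 0)%VS].

Lemma G0G S : S \in G0 -> S \in G.
Proof. by rewrite inE => /andP []. Qed.

Lemma capLS1 S : S \in G0 -> \dim (L :&: S) = 1.
Proof.
rewrite inE => /andP [SG nz].
have h1 : \dim (L :&: S) < \dim L.
  apply: dim_lt; first exact: capvSl.
  by apply/negP; rewrite subv_cap subvv /= => /(nLS SG).
rewrite dL in h1; have : \dim (L :&: S) != 0 by rewrite dimv_eq0.
by case: (\dim _) h1 => [|[|]].
Qed.

Lemma dimLS S : S \in G0 -> \dim (L + S) = g.+1 /\ 0 < g.
Proof.
move=> S0; have h := dimv_sum_cap L S.
rewrite capLS1 // dL (spG.1 S (G0G S0)) in h.
have := dimvS (capvSr L S); rewrite capLS1 // (spG.1 S (G0G S0)).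
lia.
Qed.

Lemma BcapS B S : \dim B = 3 -> (L <= B)%VS -> S \in G0 -> (B <= L + S)%VS ->
  \dim (B :&: S) = 2.
Proof.
move=> dB LB S0 BLS.
have h := dimv_sum_cap B S.
have [dLS g0] := dimLS S0.
rewrite dB (spG.1 S (G0G S0)) in h.
have le1 : \dim (B + S) <= \dim (L + S) by apply: dimvS; rewrite subv_add BLS addvSr.
have lt2 : \dim (B :&: S) < \dim B.
  apply: dim_lt; first exact: capvSl.
  apply/negP; rewrite subv_cap subvv /= => BS.
  by apply: (nLS (G0G S0)); apply: subv_trans BS.
rewrite dLS in le1; rewrite dB in lt2; lia.
Qed.

Lemma uniq_pt (P : {vspace vT}) S1 S2 : \dim P = 1 -> S1 \in G -> S2 \in G ->
  (P <= S1)%VS -> (P <= S2)%VS -> S1 = S2.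
Proof.
move=> dP S1G S2G PS1 PS2.
have /cards1P [S0 e] : #|[set S in G | (P <= S)%VS]| == 1 by rewrite (spG.2 P dP).
have : S1 \in [set S in G | (P <= S)%VS] by rewrite inE S1G.
have : S2 \in [set S in G | (P <= S)%VS] by rewrite inE S2G.
by rewrite e !inE => /eqP -> /eqP ->.
Qed.

Lemma uniq_S B S1 S2 : \dim B = 3 -> (L <= B)%VS -> S1 \in G0 -> S2 \in G0 ->
  (B <= L + S1)%VS -> (B <= L + S2)%VS -> S1 = S2.
Proof.
move=> dB LB S10 S20 B1 B2.
have d1 := BcapS dB LB S10 B1.
have d2 := BcapS dB LB S20 B2.
set W := ((B :&: S1) :&: (B :&: S2))%VS.
have h : (\dim ((B :&: S1) + (B :&: S2)) + \dim W = \dim (B :&: S1) + \dim (B :&: S2))%N := dimv_sum_cap (B :&: S1) (B :&: S2).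
have le : \dim ((B :&: S1) + (B :&: S2)) <= \dim B.
  by apply: dimvS; rewrite subv_add !capvSl.
have W0 : W != 0%VS by rewrite -dimv_eq0; rewrite d1 d2 dB in h le *; lia.
have x0 : vpick W != 0%R by rewrite vpick0.
have xW := memv_pick W.
apply: (uniq_pt (P := <[vpick W]>)); rewrite ?dim_vline ?x0 ?G0G //.
  by rewrite -memvE; apply: subvP xW; apply: subv_trans (capvSl _ _) (capvSr _ _).
by rewrite -memvE; apply: subvP xW; apply: subv_trans (capvSr _ _) (capvSr _ _).
Qed.

Lemma bad_iff B : \dim B = 3 -> (L <= B)%VS ->
  ~~ scattered G B = [exists S in G0, (B <= L + S)%VS].
Proof.
move=> dB LB; apply/idP/idP.
  move/forall_inPn => [S SG] /forallPn [W].
  rewrite negb_imply negbK => /andP [/andP [/eqP dW WB] WS].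
  have h := dimv_sum_cap W L.
  have le1 : \dim (W + L) <= \dim B by apply: dimvS; rewrite subv_add WB LB.
  have lt2 : \dim (W :&: L) < \dim L.
    apply: dim_lt; first exact: capvSr.
    apply/negP; rewrite subv_cap subvv andbT => LW.
    by apply: (nLS SG); apply: subv_trans WS.
  rewrite dW dL dB in h le1 lt2.
  apply/exists_inP; exists S.
  rewrite inE SG /=; apply/negP => /eqP e.
  have : (W :&: L <= L :&: S)%VS.
    by rewrite subv_cap capvSr (subv_trans (capvSl W L) WS).
  rewrite e subv0 -dimv_eq0 => /eqP d0; lia.
  have dLS : \dim (W + L) = 3 by lia.
  have e : (W + L)%VS = B by apply: eqv_dim; rewrite ?subv_add ?WB ?LB ?dLS ?dB.
  by rewrite -e subv_add addvSl (subv_trans WS (addvSr L S)).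
case/exists_inP => S S0 BLS; apply/forall_inPn; exists S; first exact: G0G.
apply/forallPn; exists (B :&: S)%VS.
by rewrite negb_imply negbK (BcapS dB LB S0 BLS) eqxx capvSl capvSr.
Qed.


Lemma sum_b2n (T : finType) (A : {set T}) (P : pred T) :
  \sum_(i in A) (P i : nat) = #|[set i in A | P i]|.
Proof.
rewrite -sum1_card big_mkcond [in RHS]big_mkcond /=; apply: eq_bigr => i _.
by rewrite !inE; case: (i \in A); case: (P i).
Qed.

Lemma card_G0 : #|G0| = #|ext_set 0%VS L|.
Proof.
have e1 : forall S, S \in G0 ->
    #|[set P in ext_set 0%VS L | (P <= S)%VS]| = 1.
  move=> S S0; transitivity #|[set (L :&: S)%VS]|; last exact: cards1. apply: eq_card => P.
  rewrite !inE dimv0; apply/idP/idP.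
    case/andP => /and3P [/eqP dP _ PL] PS; apply/eqP; apply: eqv_dim.
      by rewrite subv_cap PL PS.
    by rewrite capLS1 // dP.
  move/eqP => ->; by rewrite capLS1 // eqxx sub0v capvSl capvSr.
have e2 : forall P, P \in ext_set 0%VS L ->
    #|[set S in G0 | (P <= S)%VS]| = 1.
  move=> P; rewrite inE dimv0 => /and3P [/eqP dP _ PL].
  transitivity #|[set S in G | (P <= S)%VS]|; last exact: (spG.2 P dP).
  apply: eq_card => S; rewrite !inE.
  apply/andP/andP => [[/andP [SG _] PS]|[SG PS]]; split => //.
  rewrite SG /=; apply/negP => /eqP e.
  have : (P <= L :&: S)%VS by rewrite subv_cap PL PS.
  by rewrite e subv0 -dimv_eq0 dP.
rewrite -sum1_card (eq_bigr _ (fun S S0 => esym (e1 S S0))).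
under eq_bigr do rewrite -sum_b2n.
rewrite exchange_big /=.
rewrite -sum1_card; apply: eq_bigr => P P0.
by rewrite sum_b2n e2.
Qed.

Lemma card_bad :
  #|[set B in ext_set L fullv | ~~ scattered G B]| = \sum_(S in G0) #|ext_set L (L + S)|.
Proof.
have e : forall S, S \in G0 -> ext_set L (L + S) = [set B in ext_set L fullv | (B <= L + S)%VS].
  move=> S _; apply/setP => B; rewrite !inE subvf andbT; by rewrite andbA.
under eq_bigr => S S0 do rewrite (e S S0).
under eq_bigr do rewrite -sum_b2n.
rewrite exchange_big /= -sum_b2n; apply: eq_bigr => B.
rewrite inE dL => /and3P [/eqP dB LB _].
rewrite sum_b2n bad_iff //.
case: (boolP [exists S in G0, (B <= L + S)%VS]) => [/exists_inP [S S0 BS]|ne].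
  symmetry; transitivity #|[set S]|; last exact: cards1. apply: eq_card => S'; rewrite in_set1 in_set.
  apply/andP/eqP => [[S'0 BS']|->]; last by split.
  exact: (uniq_S dB LB S'0 S0 BS' BS).
symmetry; apply/eqP; rewrite cards_eq0; apply/eqP/setP => S; rewrite in_set0 in_set.
apply/negP => /andP [S0 BS]; move/negP: ne; apply; apply/exists_inP; exists S => //.
Qed.

End Main.

Theorem lemma3 (F : finFieldType) (v g : nat)
    (G : {set {vspace 'rV[F]_v}}) (L : {vspace 'rV[F]_v}) :
  is_spread g G ->
  \dim L = 2 ->
  (forall S, S \in G -> ~ (L <= S)%VS) ->
  ((#|[set B : {vspace 'rV[F]_v} | [&& \dim B == 3, (L <= B)%VS &
        scattered G B]]|%:R : rat)
   = gauss #|F| (v - 2) 1 - gauss #|F| 2 1 * gauss #|F| (g - 1) 1)%R.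
Proof.
move=> spG dL nLS.
set T3 := ext_set L fullv.
have hID := cardsID [set B | scattered G B] T3.
have e1 : T3 :&: [set B | scattered G B] =
    [set B : {vspace 'rV[F]_v} | [&& \dim B == 3, (L <= B)%VS & scattered G B]].
  by apply/setP => B; rewrite !inE dL subvf andbT andbA.
have e2 : T3 :\: [set B | scattered G B] = [set B in T3 | ~~ scattered G B].
  by apply/setP => B; rewrite !inE andbC.
rewrite e1 e2 (card_bad spG dL nLS) in hID.
have -> : #|[set B : {vspace 'rV[F]_v} | [&& \dim B == 3, (L <= B)%VS & scattered G B]]|
   = (#|T3| - \sum_(S in G0 G L) #|ext_set L (L + S)|)%N by lia.
rewrite natrB; last by lia.
rewrite natr_sum.
set Q := (#|F|%:R : rat).
have vT3 : (#|T3|%:R : rat) = ((Q ^+ (v - 2) - 1) / (Q - 1))%R.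
  by rewrite ext_val ?subvf // dimvf dim_matrix /= mul1r dL.
have vS : forall S, S \in G0 G L -> (#|ext_set L (L + S)|%:R : rat) = ((Q ^+ (g - 1) - 1) / (Q - 1))%R.
  move=> S S0; rewrite ext_val ?addvSl //.
  have [d _] := dimLS spG dL nLS S0.
  by rewrite d dL; congr ((_ ^+ _ - 1) / _)%R; lia.
rewrite (eq_bigr _ vS) sumr_const (card_G0 spG dL nLS) -(mulr_natr _ #|ext_set 0%VS L|).
rewrite ext_val ?sub0v // dimv0 dL vT3.
rewrite /gauss !big_ord1 /= !subn0 expr1.
by rewrite [X in (_ - X)%R]mulrC.
Qed.
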